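(* Let $A_1,\ldots,A_n$ be events in a probability space, let $X$ be the number of these events that occur, and let $S_{k+1}=\sum_{1\le i_1<\cdots<i_{k+1}\le n}P(A_{i_1}\cdots A_{i_{k+1}})$. For integers $i,k$ with $1\le i\le k$ and $k+1\le n$, $$E\left[\binom{X-i}{k+1-i}\right]\ge\frac{\binom{k+1}{i}}{\binom{n}{i}}S_{k+1}.$$
   Context: Binomial convention: for integers $s,t$, $\binom{t}{s}=0$ if $\min(s,t)<0$ or $s>t$; otherwise $\binom{t}{s}=\frac{t!}{s!(t-s)!}$. $A_{i_1}\cdots A_{i_j}$ denotes the intersection of the events. *)

(* Defs.v *)
From HB Require Import structures.
From mathcomp Require Import all_boot all_order all_algebra.
From mathcomp Require Import all_classical all_reals all_analysis.
Set Implicit Arguments. Unset Strict Implicit. Unset Printing Implicit Defensive.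
Import Order.TTheory GRing.Theory Num.Theory.

(* Binomial coefficient on integers with the paper's convention:
   binomZ t s = 0 if min(s,t) < 0 or s > t, else t!/(s!(t-s)!). *)
Definition binomZ (t s : int) : nat :=
  if ((s < 0) || (t < 0))%R then 0%N else 'C(`|t|%N, `|s|%N).

Definition num_occ {T : Type} {n : nat} (A : 'I_n -> set T) (w : T) : nat :=
  #|[set j : 'I_n | `[< A j w >]]|.

Definition Ssum {d : measure_display} {T : measurableType d} {R : realType}
  (P : probability T R) {n : nat} (A : 'I_n -> set T) (m : nat) : \bar R :=
  (\sum_(I : {set 'I_n} | #|I| == m) P (\bigcap_(j in [set j | j \in I]) A j)%classic)%E.

(* Main.v *)
Require Import Defs.
From HB Require Import structures.
From mathcomp Require Import all_boot all_order all_algebra.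
From mathcomp Require Import all_classical all_reals all_analysis.
From mathcomp Require Import zify.
Import Order.TTheory GRing.Theory Num.Theory.
Local Open Scope ring_scope.

Lemma binom_id (X m i : nat) : (i <= m)%N -> (m <= X)%N ->
  ('C(X, m) * 'C(m, i) = 'C(X, i) * 'C(X - i, m - i))%N.
Proof.
move=> him hmX.
have hf : (0 < i`! * (m - i)`! * (X - m)`!)%N by rewrite !muln_gt0 !fact_gt0.
apply/eqP; rewrite -(eqn_pmul2r hf); apply/eqP.
have e1 : ('C(X, m) * 'C(m, i) * (i`! * (m - i)`! * (X - m)`!) = X`!)%N.
  rewrite -(bin_fact hmX) -(bin_fact him).
  by rewrite !mulnA; lia.
have hiX : (i <= X)%N by apply: leq_trans him hmX.
have hmi : (m - i <= X - i)%N by lia.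
have e2 : ('C(X, i) * 'C(X - i, m - i) * (i`! * (m - i)`! * (X - m)`!) = X`!)%N.
  rewrite -(bin_fact hiX) -(bin_fact hmi).
  have -> : (X - i - (m - i) = X - m)%N by lia.
  by rewrite !mulnA; lia.
by rewrite e1 e2.
Qed.

Lemma key (R : realType) (X n m i : nat) : (i <= m)%N -> (m <= n)%N -> (X <= n)%N ->
  ('C(m, i)%:R / 'C(n, i)%:R : R) * 'C(X, m)%:R <= 'C(X - i, m - i)%:R.
Proof.
move=> him hmn hXn.
have [hXm|hmX] := ltnP X m.
  by rewrite (bin_small hXm) mulr0n mulr0 ler0n.
have hn : (0 : R) < 'C(n, i)%:R by rewrite ltr0n bin_gt0; apply: leq_trans him hmn.
rewrite mulrAC ler_pdivrMr // -!natrM ler_nat mulnC binom_id //.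
rewrite mulnC leq_mul2l; apply/orP; right; exact: leq_bin2l.
Qed.

Lemma le_integral_nonmeas d (T : measurableType d) (R : realType)
  (mu : {measure set T -> \bar R}) (f g : T -> \bar R) :
  (forall x, (0 <= f x)%E) -> (forall x, (f x <= g x)%E) ->
  (\int[mu]_(x in setT) f x <= \int[mu]_(x in setT) g x)%E.
Proof.
move=> f0 fg.
have g0 : forall x, (0 <= g x)%E by move=> x; apply: le_trans (f0 x) (fg x).
rewrite !ge0_integralTE //.
apply/ge_ereal_sup => _ [h hf <-]; apply: ereal_sup_ubound.
by exists h => // x; apply: le_trans (hf x) (fg x).
Qed.

Theorem lemma3 (d : measure_display) (T : measurableType d) (R : realType)
  (P : probability T R) (n : nat) (A : 'I_n -> set T)
  (mA : forall j, measurable (A j)) (i k : nat)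
  (hi1 : (1 <= i)%N) (hik : (i <= k)%N) (hkn : (k + 1 <= n)%N) :
  (\int[P]_(w in setT)
      ((binomZ ((num_occ A w)%:Z - i%:Z) ((k + 1)%:Z - i%:Z))%:R : R)%:E
   >= ('C(k + 1, i)%:R / 'C(n, i)%:R : R)%:E * Ssum P A (k + 1))%E.
Proof.
set m := (k + 1)%N.
have him : (i <= m)%N by rewrite /m; lia.
set B := fun I : {set 'I_n} => (\bigcap_(j in [set j | j \in I]) A j)%classic.
have mB : forall I, measurable (B I).
  move=> I; rewrite /B; apply: fin_bigcap_measurable; first exact: finite_finset.
  by move=> j _; apply: mA.
have E : forall I, P (B I) = (\int[P]_(w in setT) (\1_(B I) w)%:E)%E.
  by move=> I; rewrite integral_indic // setIT.
rewrite /Ssum.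
rewrite (eq_bigr (fun I => \int[P]_(w in setT) (\1_(B I) w)%:E)%E); last first.
  by move=> I _; apply: E.
rewrite -(big_filter _ (fun I : {set _} => #|I| == m)) -ge0_integral_sum //; last first.
  - by move=> I; apply/measurable_realfun.measurable_EFinP; apply: measurable_realfun.measurable_indic.
have c0 : (0 : R) <= 'C(m, i)%:R / 'C(n, i)%:R by rewrite divr_ge0.
rewrite -ge0_integralZl //.
all: try (apply: emeasurable_sum => I;
  by apply/measurable_realfun.measurable_EFinP; apply: measurable_realfun.measurable_indic).
all: try by rewrite lee_fin.
apply: le_integral_nonmeas.
  by move=> x; rewrite sumEFin -EFinM lee_fin mulr_ge0 // sumr_ge0.
move=> w; rewrite sumEFin -EFinM lee_fin.
rewrite big_filter.
set S := [set j | `[< A j w >]].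
have HX : num_occ A w = #|S| by [].
have hS : \sum_(I : {set 'I_n} | #|I| == m) \1_(B I) w = ('C(#|S|, m))%:R :> R.
  transitivity (\sum_(I : {set 'I_n} | #|I| == m) ((I \subset S) : nat)%:R : R).
    apply: eq_bigr => I _; rewrite indicE; congr (_%:R); congr nat_of_bool.
    apply/idP/idP.
    - rewrite in_setE /B => H; apply/fintype.subsetP => j hj; rewrite inE; apply/asboolP.
      by apply: H.
    - move/fintype.subsetP => H; rewrite in_setE /B => j hj.
      by move: (H j hj); rewrite inE => /asboolP.
  rewrite -natr_sum; congr (_%:R).
  rewrite -cards_draws -sum1dep_card big_mkcond [RHS]big_mkcond.
  by apply: eq_bigr => I _; case: (I \subset S); case: (#|I| == m).
rewrite hS HX.
have hXn : (#|S| <= n)%N by rewrite -[X in (_ <= X)%N](card_ord n) max_card.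
have [hXi|hiX] := ltnP #|S| i.
  rewrite (bin_small (leq_trans hXi him)) mulr0n mulr0 ler0n //.
rewrite subzn // subzn // /binomZ /=.
apply: key => //; rewrite /m; lia.
move=> x _; rewrite sumEFin lee_fin; apply: sumr_ge0 => I _.
by rewrite indicE ler0n.
Qed.
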